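(* Let $K$ be a field, $A=K[x_1,\dots,x_n]$, and $P=(x_1^{e_1},\dots,x_r^{e_r})$ for some $r\le n$ and integers $2\le e_1\le\cdots\le e_r$. Let $J\subset A$ be a strongly stable ideal and $I\subset A$ a monomial ideal containing $P+J$. Fix variables $a=x_i$, $b=x_j$ with $i<j$ and an integer $t>0$. Then $J\subset \mathrm{Shift}_{a,b,t}(I)$.
   Context: A monomial ideal $J$ is strongly stable if whenever $x_k m\in J$ for a monomial $m$, then $x_l m\in J$ for all $l<k$. For a monomial ideal $I$, variables $a=x_i,b=x_j$ with $i<j$, and $t\in\mathbb{Z}_{\ge0}$, $\mathrm{Shift}_{a,b,t}(I)$ is the $K$-vector space spanned by the following monomials, where $f$ ranges over monomials divisible by neither $a$ nor $b$ and $s,l$ range over integers with $0\le s<l$: (1) $fa^sb^r$ whenever $fa^sb^r\in I$ and $r<t$; (2) $fa^sb^{s+t}$ whenever $fa^sb^{s+t}\in I$; (3) $fa^lb^{s+t}$ whenever $fa^lb^{s+t}\in I$ or $fa^sb^{l+t}\in I$; (4) $fa^sb^{l+t}$ whenever both $fa^lb^{s+t}\in I$ and $fa^sb^{l+t}\in I$. *)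

(* Defs.v *)
From mathcomp Require Import all_boot all_algebra.
From mathcomp Require Import mpoly.
Set Implicit Arguments. Unset Strict Implicit. Unset Printing Implicit Defensive.
Import GRing.Theory.
Local Open Scope ring_scope.

Section Defs.
Variables (n : nat) (K : fieldType).

Definition is_ideal (I : {mpoly K[n]} -> Prop) : Prop :=
  [/\ I 0,
      (forall p q, I p -> I q -> I (p + q)) &
      (forall p q, I q -> I (p * q))].

Definition monomial_ideal (I : {mpoly K[n]} -> Prop) : Prop :=
  is_ideal I /\ forall p (m : 'X_{1..n}), I p -> m \in msupp p -> I 'X_[m].

Definition strongly_stable (J : {mpoly K[n]} -> Prop) : Prop :=
  monomial_ideal J /\
  forall (m : 'X_{1..n}) (k l : 'I_n), (l < k)%N ->
    J ('X_k * 'X_[m]) -> J ('X_l * 'X_[m]).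

Definition monomial_span (S : 'X_{1..n} -> Prop) (p : {mpoly K[n]}) : Prop :=
  exists (s : seq 'X_{1..n}) (c : 'X_{1..n} -> K),
    (forall m, m \in s -> S m) /\ p = \sum_(m <- s) c m *: 'X_[m].

(* The monomial obtained from m by giving exponent ea to a = x_i and eb to b = x_j,
   keeping the cofactor f (the part not involving a, b) *)
Definition setab (i j : 'I_n) (m : 'X_{1..n}) (ea eb : nat) : 'X_{1..n} :=
  [multinom (if k == i then ea else if k == j then eb else m k) | k < n].

(* Writing a monomial
   as f a^u b^v (f divisible by neither a nor b):
   (1) v < t, and it lies in I;
   (2) v = u + t (s = u), and it lies in I;
   (3) u = l, v = s + t with s < l: f a^l b^(s+t) \in I or f a^s b^(l+t) \in I;
   (4) u = s, v = l + t with s < l: both f a^l b^(s+t) and f a^s b^(l+t) in I. *)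
Definition shift_mon (I : {mpoly K[n]} -> Prop) (i j : 'I_n) (t : nat)
    (m : 'X_{1..n}) : Prop :=
  let f := m in
  (exists s r : nat, (r < t)%N /\ m = setab i j f s r /\ I 'X_[m])
  \/ (exists s : nat, m = setab i j f s (s + t) /\ I 'X_[m])
  \/ (exists s l : nat, (s < l)%N /\ m = setab i j f l (s + t) /\
        (I 'X_[setab i j f l (s + t)] \/ I 'X_[setab i j f s (l + t)]))
  \/ (exists s l : nat, (s < l)%N /\ m = setab i j f s (l + t) /\
        I 'X_[setab i j f l (s + t)] /\ I 'X_[setab i j f s (l + t)]).

Definition Shift (I : {mpoly K[n]} -> Prop) (i j : 'I_n) (t : nat)
  : {mpoly K[n]} -> Prop :=
  monomial_span (shift_mon I i j t).

End Defs.

(* Main.v *)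
Require Import Defs.
From mathcomp Require Import all_boot all_algebra.
From mathcomp Require Import mpoly.
From mathcomp Require Import zify.
Local Open Scope ring_scope.

Lemma ss_step (K : fieldType) (n : nat) (J : {mpoly K[n]} -> Prop) (i j : 'I_n)
  (m : 'X_{1..n}) : strongly_stable J -> (i < j)%N -> (0 < m j)%N -> J 'X_[m] ->
  J 'X_[[multinom (if k == i then (m k).+1 else if k == j then (m k).-1 else m k) | k < n]].
Proof.
move=> [_ hs] hij hm hJ.
set m0 := [multinom (if k == j then (m k).-1 else m k) | k < n].
have e1 : m = (U_(j) + m0)%MM.
  apply/mnmP=> k; rewrite mnmDE mnm1E !mnmE.
  case: (eqVneq j k) => [<-|hk] /=; first by case: (m j) hm.
  by [].
have e2 : [multinom (if k == i then (m k).+1 else if k == j then (m k).-1 else m k) | k < n]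
   = (U_(i) + m0)%MM.
  apply/mnmP=> k; rewrite mnmDE mnm1E !mnmE.
  case: (eqVneq i k) => [<-|hk] /=; last by [].
  have hij' : (i == j) = false by exact: ltn_eqF hij.
  by rewrite hij'.
rewrite e2 mpolyXD; apply: (hs m0 j i hij); rewrite -mpolyXD -e1 //.
Qed.
Arguments ss_step {K n J i j m}.

Lemma ss_iter (K : fieldType) (n : nat) (J : {mpoly K[n]} -> Prop) (i j : 'I_n)
  (d : nat) : strongly_stable J -> (i < j)%N -> forall m : 'X_{1..n},
  (d <= m j)%N -> J 'X_[m] ->
  J 'X_[[multinom (if k == i then (m k + d)%N else if k == j then (m k - d)%N else m k) | k < n]].
Proof.
move=> hs hij; elim: d => [|d IH] m hd hJ.
  suff -> : [multinom (if k == i then (m k + 0)%N else if k == j then (m k - 0)%N else m k) | k < n] = m by [].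
  by apply/mnmP=> k; rewrite mnmE addn0 subn0; case: ifP => [/eqP->|_] //; case: ifP => [/eqP->|_].
have := IH m (ltnW hd) hJ => /(ss_step hs hij).
have hji : (j == i) = false by exact: gtn_eqF hij.
rewrite !mnmE eqxx hji /= subn_gt0 => H.
have := H hd.
congr (J 'X_[_]); apply/mnmP=> k; rewrite !mnmE.
case: (eqVneq k i) => [->|hki]; first by rewrite addnS.
case: (eqVneq k j) => [->|hkj] //; by rewrite subnS.
Qed.
Arguments ss_iter {K n J i j} d.

Theorem mainTheorem3 (K : fieldType) (n r : nat) (e : nat -> nat)
    (J I : {mpoly K[n]} -> Prop) (i j : 'I_n) (t : nat) :
  (r <= n)%N ->
  (forall k, (k < r)%N -> (2 <= e k)%N) ->
  (forall k l, (k <= l)%N -> (l < r)%N -> (e k <= e l)%N) ->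
  strongly_stable J ->
  monomial_ideal I ->
  (* I contains P + J, P = (x_1^e_1, ..., x_r^e_r) *)
  (forall k (hk : (k < n)%N), (k < r)%N -> I ('X_(Ordinal hk) ^+ e k)) ->
  (forall p, J p -> I p) ->
  (i < j)%N ->
  (0 < t)%N ->
  forall p, J p -> Shift I i j t p.
Proof.
move=> _ _ _ hs _ _ hJI hij _ p hp.
exists (msupp p), (fun m => p@_m); split; last exact: mpolyE.
move=> m hm.
have hJm : J 'X_[m] by case: hs => [[_ H]] _; exact: H _ _ hp hm.
have hIm := hJI _ hJm.
have hij' : (i == j) = false by exact: ltn_eqF hij.
have hji : (j == i) = false by exact: gtn_eqF hij.
have sab : forall (ea eb : nat), m i = ea -> m j = eb -> m = setab i j m ea eb.
  move=> ea eb <- <-; apply/mnmP=> k; rewrite mnmE.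
  by case: (eqVneq k i) => [->|]; [|case: (eqVneq k j) => [->|]].
have sabE : forall ea eb, setab i j m ea eb i = ea /\ setab i j m ea eb j = eb.
  by move=> ea eb; rewrite !mnmE eqxx hji eqxx.
rewrite /shift_mon.
case: (ltnP (m j) t) => hjt.
  by left; exists (m i), (m j); split=> //; split=> //; apply: sab.
right.
case: (eqVneq (m j) (m i + t)%N) => heq.
  by left; exists (m i); split=> //; apply: sab.
right.
case: (ltnP (m j - t) (m i)) => hlt.
  left; exists (m j - t)%N, (m i); split=> //.
  have e1 : m = setab i j m (m i) (m j - t + t) by apply: sab; rewrite // subnK.
  by split=> //; left; rewrite -e1.
right; exists (m i), (m j - t)%N.
have hlt' : (m i < m j - t)%N.
  rewrite ltn_neqAle hlt andbT; apply/eqP=> h; move/eqP: heq; apply.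
  by rewrite h subnK.
have e1 : m = setab i j m (m i) (m j - t + t) by apply: sab; rewrite // subnK.
split=> //; split=> //; split; last by rewrite -e1.
apply: hJI.
have := ss_iter (m j - t - m i)%N hs hij m.
have hd : (m j - t - m i <= m j)%N by lia.
move=> /(_ hd hJm); congr (J 'X_[_]); apply/mnmP=> k; rewrite !mnmE.
case: (eqVneq k i) => [->|hki]; first by rewrite subnKC // ltnW.
case: (eqVneq k j) => [->|hkj] //.
by lia.
Qed.
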